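(* For any two Mori fiber primitive generating sets $A_{\mathrm f}\subset A$ and $A'_{\mathrm f}\subset A'$ in $N_{\mathbb{R}}$, there exists a finite sequence of elementary links connecting them.
   Context: $N\simeq\mathbb{Z}^d$, $N_{\mathbb{R}}=N\otimes\mathbb{R}$. A primitive generating set of a real vector space spanned by a lattice is a finite set of primitive lattice points whose nonnegative linear combinations give the whole space. A reduction $B\supset B'$: inclusion of primitive generating sets of the same space with $|B|=|B'|+1$. A fiber structure $A_{\mathrm f}\subset A$ ($A$ a primitive generating set): $A_{\mathrm f}\ne\emptyset$ is a primitive generating set of its linear span $L$ (lattice $N\cap L$) and $A_{\mathrm f}=L\cap A$; base $A_{\mathrm b}=\{\bar\pi(v):v\in A\setminus A_{\mathrm f}\}$ where $\pi:N\to N/(N\cap L)$ and $\bar\pi(v)$ is the primitive generator of $\mathbb{R}_{\ge0}\pi(v)$. Irreducible: $|A|=|A_{\mathrm f}|+|A_{\mathrm b}|$. Mori fiber structure (written $A_{\mathrm f}\subset_m A$): irreducible with $|A_{\mathrm f}|=\dim L+1$; such a pair is a Mori fiber primitive generating set. An elementary link between $A_{\mathrm f}\subset_m A$ and $A'_{\mathrm f}\subset_m A'$ is one of the following, or the same with the two pairs exchanged: (trivial) $A=A'$, $A_{\mathrm f}=A'_{\mathrm f}$; (I$_{\mathrm d}$) $A\supset A'$ a reduction, $A_{\mathrm f}=A'_{\mathrm f}$; (I$_{\mathrm m}$) a fiber structure $A''_{\mathrm f}\subset A''$ with $A''=A$, $A_{\mathrm f}\subset_m A''_{\mathrm f}$,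 $A''\supset A'$ and $A''_{\mathrm f}\supset A'_{\mathrm f}$ reductions; (II$_{\mathrm{irr}}$) a fiber structure $A''_{\mathrm f}\subset A''$ with $A''\supset A$, $A''\supset A'$, $A''_{\mathrm f}\supset A_{\mathrm f}$, $A''_{\mathrm f}\supset A'_{\mathrm f}$ all reductions; (II$_{\mathrm{ni}}$) a fiber structure $A''_{\mathrm f}\subset A''$ with $A''\supset A$, $A''\supset A'$ reductions and $A_{\mathrm f}=A''_{\mathrm f}=A'_{\mathrm f}$; (IV$_{\mathrm m}$) a fiber structure $A''_{\mathrm f}\subset A''$ with $A=A''=A'$, $A_{\mathrm f}\subset_m A''_{\mathrm f}$ and $A'_{\mathrm f}\subset_m A''_{\mathrm f}$. A sequence of elementary links connecting two Mori fiber primitive generating sets is a chain of Mori fiber primitive generating sets from one to the other in which consecutive members are related by an elementary link. *)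

(* Defs.v *)
From HB Require Import structures.
From mathcomp Require Import all_boot all_order all_algebra finmap.
From mathcomp Require Import boolp reals.
Set Implicit Arguments. Unset Strict Implicit. Unset Printing Implicit Defensive.
Import Order.TTheory GRing.Theory Num.Theory.
Local Open Scope ring_scope.
Local Open Scope fset_scope.

(* The lattice N = Z^d is 'rV[int]_d; N_R = 'rV[R]_d for a real field R. *)
Section Defs.
Variables (R : realType) (d : nat).

Definition lat := 'rV[int]_d.

Definition emb (v : lat) : 'rV[R]_d := map_mx (fun z : int => z%:~R) v.

Definition primitive (v : lat) : Prop :=
  v != 0 /\ forall (k : nat) (w : lat), v = w *+ k -> k = 1%N.

Definition spanV (B : {fset lat}) : {vspace 'rV[R]_d} :=
  <<[seq emb v | v <- B]>>%VS.

Definition incone (B : {fset lat}) (x : 'rV[R]_d) : Prop :=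
  exists c : lat -> R, (forall v, 0 <= c v) /\ x = \sum_(v <- B) c v *: emb v.

Definition pgs (B : {fset lat}) : Prop :=
  (forall v, v \in B -> primitive v) /\
  (forall x, x \in spanV B -> incone B x).

Definition reduction (B B' : {fset lat}) : Prop :=
  [/\ pgs B, pgs B', B' `<=` B, spanV B = spanV B' & #|` B| = (#|` B'|).+1].

Definition fiber (Af A : {fset lat}) : Prop :=
  [/\ pgs A, Af != fset0, pgs Af & Af = [fset v in A | emb v \in spanV Af]].

(* pi(v) and pi(w) (images in the quotient by L = span Af) lie on the same
   open ray, i.e. \bar\pi(v) = \bar\pi(w) *)
Definition sameray (Af : {fset lat}) (v w : lat) : Prop :=
  exists2 lam : R, 0 < lam & emb v - lam *: emb w \in spanV Af.

(* the base A_b, represented by the set of its fibres of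
   v |-> \bar\pi(v) on A \ Af (one element per element of A_b) *)
Definition baseRays (Af A : {fset lat}) : {fset {fset lat}} :=
  [fset [fset w in A `\` Af | `[< sameray Af v w >]] | v in A `\` Af].

Definition irreducible (Af A : {fset lat}) : Prop :=
  fiber Af A /\ #|` A| = (#|` Af| + #|` baseRays Af A|)%N.

Definition mori (Af A : {fset lat}) : Prop :=
  irreducible Af A /\ #|` Af| = (\dim (spanV Af)).+1.

Definition moriPGS (p : {fset lat} * {fset lat}) : Prop :=
  mori p.1 p.2 /\ spanV p.2 = fullv.

Definition elink0 (p q : {fset lat} * {fset lat}) : Prop :=
  let: (Af, A) := p in let: (Af', A') := q in
  (A = A' /\ Af = Af')
  \/ (reduction A A' /\ Af = Af')
  \/ (exists Af'', [/\ fiber Af'' A, mori Af Af'', reduction A A'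
                      & reduction Af'' Af'])
  \/ (exists A'' Af'', [/\ fiber Af'' A'', reduction A'' A, reduction A'' A',
                         reduction Af'' Af & reduction Af'' Af'])
  \/ (exists A'', [/\ fiber Af A'', reduction A'' A, reduction A'' A'
                    & Af = Af'])
  \/ (exists Af'', [/\ fiber Af'' A, A = A', mori Af Af'' & mori Af' Af'']).

Definition elink (p q : {fset lat} * {fset lat}) : Prop :=
  elink0 p q \/ elink0 q p.

Inductive chain : {fset lat} * {fset lat} -> {fset lat} * {fset lat} -> Prop :=
| chain_refl p : moriPGS p -> chain p p
| chain_step p q r : moriPGS p -> elink p q -> chain q r -> chain p r.

End Defs.

(* Main.v *)
Require Import Defs.
From mathcomp Require Import all_boot all_algebra finmap reals.
From HB Require Import structures.
From mathcomp Require Import all_boot all_order all_algebra finmap.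
From mathcomp Require Import boolp reals.
Set Implicit Arguments. Unset Strict Implicit. Unset Printing Implicit Defensive.
Import Order.TTheory GRing.Theory Num.Theory.
Local Open Scope fset_scope.
Local Open Scope ring_scope.



Section Work.
Variables (R : realType) (d : nat).
Local Notation lat := (lat d).
Local Notation E := (@emb R d).
Local Notation spanV := (@spanV R d).
Local Notation incone := (@incone R d).

Lemma embD (u v : lat) : E (u + v) = E u + E v.
Proof. by apply/matrixP => i j; rewrite !mxE intrD. Qed.
Lemma embN (u : lat) : E (- u) = - E u.
Proof. by apply/matrixP => i j; rewrite !mxE intrN. Qed.
Lemma emb0 : E (0 : lat) = 0.
Proof. by apply/matrixP => i j; rewrite !mxE. Qed.
Lemma embMn (u : lat) m : E (u *+ m) = m%:R *: E u.
Proof. by apply/matrixP => i j; rewrite !mxE mulmxnE rmorphMn mulr_natl. Qed.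
Lemma emb_sum (s : seq lat) (f : lat -> lat) :
  E (\sum_(x <- s) f x) = \sum_(x <- s) E (f x).
Proof.
elim: s => [|a s IH]; first by rewrite !big_nil emb0.
by rewrite !big_cons embD IH.
Qed.
Lemma emb_inj : injective E.
Proof.
move=> u v /matrixP H; apply/matrixP => i j; move: (H i j); rewrite !mxE.
exact: intr_inj.
Qed.

Lemma incone_elem (B : {fset lat}) v : v \in B -> incone B (E v).
Proof.
move=> vB; exists (fun w => (w == v)%:R); split => [w|]; first by case: (w == v).
rewrite (big_fsetD1 v) //= eqxx scale1r big1_fset ?addr0 // => w.
by rewrite !inE => /andP[/negPf -> _] _; rewrite scale0r.
Qed.

Lemma incone0 (B : {fset lat}) : incone B 0.
Proof.
exists (fun _ => 0); split => // ; by rewrite big1 // => w _; rewrite scale0r.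
Qed.

Lemma incone_add (B : {fset lat}) x y : incone B x -> incone B y -> incone B (x + y).
Proof.
move=> [c [c0 ->]] [c' [c0' ->]]; exists (fun v => c v + c' v); split.
  by move=> v; rewrite addr_ge0.
by rewrite -big_split /=; apply: eq_bigr => v _; rewrite scalerDl.
Qed.

Lemma incone_scale (B : {fset lat}) a x : 0 <= a -> incone B x -> incone B (a *: x).
Proof.
move=> a0 [c [c0 ->]]; exists (fun v => a * c v); split.
  by move=> v; rewrite mulr_ge0.
by rewrite scaler_sumr; apply: eq_bigr => v _; rewrite scalerA.
Qed.

Lemma incone_sum (B : {fset lat}) (s : seq lat) (f : lat -> 'rV[R]_d) :
  (forall x, x \in s -> incone B (f x)) -> incone B (\sum_(x <- s) f x).
Proof.
elim: s => [|a s IH] H; first by rewrite big_nil; apply: incone0.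
rewrite big_cons; apply: incone_add; first by apply: H; rewrite mem_head.
by apply: IH => x xs; apply: H; rewrite in_cons xs orbT.
Qed.

Lemma incone_trans (A B : {fset lat}) x :
  (forall v, v \in A -> incone B (E v)) -> incone A x -> incone B x.
Proof.
move=> H [c [c0 ->]]; apply: incone_sum => v vA.
by apply: incone_scale => //; apply: H.
Qed.

Lemma incone_sub (A B : {fset lat}) x : A `<=` B -> incone A x -> incone B x.
Proof.
move=> /fsubsetP AB; apply: incone_trans => v vA; apply: incone_elem; exact: AB.
Qed.

Lemma incone_span (B : {fset lat}) x : incone B x -> x \in spanV B.
Proof.
move=> [c [_ ->]]; rewrite big_seq; apply: memv_suml => v vB; apply: memvZ; apply: memv_span.
by apply: map_f.
Qed.

Lemma emb_span (B : {fset lat}) v : v \in B -> E v \in spanV B.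
Proof. by move=> vB; apply: memv_span; apply: map_f. Qed.

Definition fullpgs (B : {fset lat}) :=
  (forall v, v \in B -> primitive v) /\ (forall x, incone B x).

Lemma fullpgs_pgs B : fullpgs B -> pgs R B.
Proof. by move=> [H1 H2]; split. Qed.

Lemma fullpgs_span B : fullpgs B -> spanV B = fullv.
Proof.
move=> [_ H]; apply/eqP; rewrite eqEsubv subvf /=; apply/subvP => x _.
exact: incone_span.
Qed.

Lemma pgs_fullpgs B : pgs R B -> spanV B = fullv -> fullpgs B.
Proof. by move=> [H1 H2] Hs; split => // x; apply: H2; rewrite Hs memvf. Qed.

Lemma fullpgs_sup (A B : {fset lat}) : fullpgs A -> A `<=` B ->
  (forall v, v \in B -> primitive v) -> fullpgs B.
Proof. by move=> [_ H] AB HB; split => // x; apply: incone_sub AB (H x). Qed.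

Lemma fullpgs_trans (A B : {fset lat}) : fullpgs A ->
  (forall v, v \in A -> incone B (E v)) ->
  (forall v, v \in B -> primitive v) -> fullpgs B.
Proof. by move=> [_ H] AB HB; split => // x; apply: incone_trans AB (H x). Qed.

Lemma red_full (B B' : {fset lat}) : fullpgs B -> fullpgs B' -> B' `<=` B ->
  #|` B| = (#|` B'|).+1 -> reduction R B B'.
Proof.
move=> HB HB' sub card; split => //; try exact: fullpgs_pgs.
by rewrite !fullpgs_span.
Qed.

End Work.



Section Work2.
Variables (R : realType) (d : nat).
Local Notation lat := (lat d).
Local Notation E := (@emb R d).
Local Notation spanV := (@spanV R d).
Local Notation incone := (@incone R d).
Local Notation sameray := (@sameray R d).
Local Notation fullpgs := (@fullpgs R d).

Lemma sr_refl Af v : sameray Af v v.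
Proof. by exists 1; rewrite ?ltr01 // scale1r subrr mem0v. Qed.

Lemma sr_sym Af v w : sameray Af v w -> sameray Af w v.
Proof.
move=> [l l0 H]; exists l^-1; first by rewrite invr_gt0.
have -> : E w - l^-1 *: E v = (- l^-1) *: (E v - l *: E w).
  by rewrite scalerBr scalerA mulNr mulVf ?gt_eqF // scaleN1r opprK addrC scaleNr.
exact: memvZ.
Qed.

Lemma sr_trans Af v w u : sameray Af v w -> sameray Af w u -> sameray Af v u.
Proof.
move=> [l l0 H] [m m0 H']; exists (l * m); first by rewrite mulr_gt0.
have -> : E v - (l * m) *: E u = (E v - l *: E w) + l *: (E w - m *: E u).
  by rewrite scalerBr scalerA addrA subrK.
by apply: memvD => //; apply: memvZ.
Qed.

Definition srinj (Af A : {fset lat}) :=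
  forall v w, v \in A -> v \notin Af -> w \in A -> w \notin Af ->
    sameray Af v w -> v = w.

Lemma irr_iff (Af A : {fset lat}) : Af `<=` A ->
  (#|` A| = (#|` Af| + #|` baseRays R Af A|)%N <-> srinj Af A).
Proof.
move=> sub.
have cA : #|` A| = (#|` Af| + #|` A `\` Af|)%N.
  by rewrite (cardfsDS sub) subnKC // fsubset_leq_card.
rewrite cA /baseRays.
set f := fun v => [fset w in A `\` Af | `[< sameray Af v w >]].
have memf : forall v w, (w \in f v) = [&& w \in A, w \notin Af & `[< sameray Af v w >]].
  by move=> v w; rewrite /f !inE (andbC (w \notin Af)) andbA.
split.
  move=> /eqP; rewrite eqn_add2l eq_sym => /card_in_imfsetP inj v w vA vAf wA wAf svw.
  apply: inj; rewrite ?inE ?vA ?wA ?vAf ?wAf //.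
  apply/fsetP => u; rewrite !memf.
  case uA: (u \in A); case uAf: (u \in Af) => //=.
  apply/asboolP/asboolP => H; first by apply: sr_trans (sr_sym svw) H.
  exact: sr_trans svw H.
move=> H; congr (_ + _)%N; apply/esym/eqP/card_in_imfsetP => v w.
rewrite !inE => /andP[vAf vA] /andP[wAf wA] fe.
have : w \in f v by rewrite fe memf wA wAf /=; apply/asboolP; apply: sr_refl.
rewrite memf => /and3P[_ _ /asboolP]; exact: H.
Qed.

Record MF (Af A : {fset lat}) : Prop := MkMF {
  MF_full : fullpgs A;
  MF_ne : Af != fset0;
  MF_pgs : pgs R Af;
  MF_mem : forall v, (v \in Af) = (v \in A) && (E v \in spanV Af);
  MF_inj : srinj Af A;
  MF_card : #|` Af| = (\dim (spanV Af)).+1 }.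

Lemma MF_sub Af A : MF Af A -> Af `<=` A.
Proof. by case=> _ _ _ H _ _; apply/fsubsetP => v; rewrite H => /andP[]. Qed.

Lemma MF_moriPGS Af A : MF Af A <-> moriPGS R (Af, A).
Proof.
split.
  move=> M; have sub := MF_sub M; case: M => HA H0 HAf Hmem Hinj Hc.
  split; last exact: fullpgs_span.
  split => //; split; last by apply/(irr_iff sub).
  split => //; first exact: fullpgs_pgs.
  by apply/fsetP => v; rewrite Hmem !inE.
move=> [[[[HA H0 HAf Heq] Hirr] Hc] Hs]; rewrite /= in HA H0 HAf Heq Hirr Hc Hs.
have Hmem : forall v, (v \in Af) = (v \in A) && (E v \in spanV Af).
  by move=> v; rewrite {1}Heq !inE.
have sub : Af `<=` A by apply/fsubsetP => v; rewrite Hmem => /andP[].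
split => //; first exact: pgs_fullpgs.
by apply/(irr_iff sub).
Qed.

End Work2.



Section Work3.
Variables (R : realType) (d : nat).
Local Notation lat := (lat d).
Local Notation E := (@emb R d).
Local Notation spanV := (@spanV R d).
Local Notation incone := (@incone R d).
Local Notation sameray := (@sameray R d).
Local Notation fullpgs := (@fullpgs R d).
Local Notation MF := (@MF R d).
Local Notation chain := (@chain R d).
Local Notation elink := (@elink R d).
Local Notation mPGS := (@moriPGS R d).

Lemma chain_start p q : chain p q -> mPGS p.
Proof. by case. Qed.

Lemma chain_end p q : chain p q -> mPGS q.
Proof. by elim=> // *. Qed.

Lemma chain_trans p q r : chain p q -> chain q r -> chain p r.
Proof.
elim=> // p0 q0 r0 H0 H1 H2 IH H3; apply: chain_step H0 H1 _; exact: IH.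
Qed.

Lemma elink_sym p q : elink p q -> elink q p.
Proof. by case; [right|left]. Qed.

Lemma chain_link p q : mPGS p -> mPGS q -> elink p q -> chain p q.
Proof. by move=> Hp Hq Hl; apply: chain_step Hp Hl (chain_refl Hq). Qed.

Lemma chain_sym p q : chain p q -> chain q p.
Proof.
elim=> [p0 H|p0 q0 r0 H0 H1 H2 IH]; first exact: chain_refl.
apply: chain_trans IH _; apply: chain_link => //; first exact: chain_start H2.
exact: elink_sym.
Qed.

Lemma fiber_of Af A : fullpgs A -> Af != fset0 -> pgs R Af ->
  (forall v, (v \in Af) = (v \in A) && (E v \in spanV Af)) -> fiber R Af A.
Proof.
move=> HA H0 HAf Hmem; split => //; first exact: fullpgs_pgs.
by apply/fsetP => v; rewrite Hmem !inE.
Qed.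

Lemma MF_prim Af A v : MF Af A -> v \in A -> primitive v.
Proof. by case=> [[H _]] *; apply: H. Qed.

Lemma MF_add Af A x : MF Af A -> primitive x -> E x \notin spanV Af -> x \notin A ->
  (forall b, b \in A -> b \notin Af -> ~ sameray Af x b) -> MF Af (x |` A).
Proof.
move=> M px xL xA Hb; have sub := MF_sub M.
case: M => HA H0 HAf Hmem Hinj Hc; split => //.
- apply: (fullpgs_sup HA (fsubsetU1 _ _)) => v; rewrite !inE => /orP[/eqP->//|].
  by case: HA => H _; apply: H.
- move=> v; rewrite !inE; case: (eqVneq v x) => [->|_] /=; last exact: Hmem.
  by rewrite (negPf xL); apply/negP => /(fsubsetP sub); rewrite (negPf xA).
- move=> v w; rewrite !inE => /orP[/eqP->|vA] vAf /orP[/eqP->|wA] wAf // svw.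
  + by case: (Hb w wA wAf svw).
  + by case: (Hb v vA vAf (sr_sym svw)).
  + exact: Hinj.
Qed.

Lemma MF_swap Af A x b : MF Af A -> primitive x -> E x \notin spanV Af ->
  x \notin A -> b \in A -> b \notin Af -> sameray Af x b -> MF Af ((x |` A) `\ b).
Proof.
move=> M px xL xA bA bAf sxb; have sub := MF_sub M.
have xb : x != b by apply: contraNneq xA => ->.
case: M => HA H0 HAf Hmem Hinj Hc; split => //.
- apply: (fullpgs_trans HA) => [v vA|v]; last first.
    rewrite !inE => /andP[_ /orP[/eqP->//|]]; by case: HA => H _; apply: H.
  case: (eqVneq v b) => [->|vb]; last by apply: incone_elem; rewrite !inE vb vA orbT.
  case: sxb => l l0 Hl.
  have -> : E b = l^-1 *: E x + l^-1 *: (- (E x - l *: E b)).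
    by rewrite -scalerDr opprB addrCA subrr addr0 scalerA mulVf ?gt_eqF // scale1r.
  apply: incone_add; apply: incone_scale; rewrite ?invr_ge0 ?ltW //.
    by apply: incone_elem; rewrite !inE xb eqxx.
  apply: (@incone_sub _ _ Af); last by case: HAf => _ H; apply: H; rewrite memvN.
  apply/fsubsetP => u uAf; rewrite !inE (fsubsetP sub _ uAf) orbT andbT.
  by apply: contraNneq bAf => <-.
- move=> v; rewrite !inE; case: (eqVneq v b) => [->|vb] /=; first exact: negPf.
  case: (eqVneq v x) => [->|_] /=; last exact: Hmem.
  by rewrite (negPf xL); apply/negP => /(fsubsetP sub); rewrite (negPf xA).
- move=> v w; rewrite !inE => /andP[vb /orP[/eqP->|vA]] vAf /andP[wb /orP[/eqP->|wA]] wAf // svw.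
  + by move: wb; rewrite (Hinj b w bA bAf wA wAf (sr_trans (sr_sym sxb) svw)) eqxx.
  + by move: vb; rewrite (Hinj b v bA bAf vA vAf (sr_trans (sr_sym sxb) (sr_sym svw))) eqxx.
  + exact: Hinj.
Qed.

Lemma MF_del Af A b : MF Af A -> b \in A -> b \notin Af -> fullpgs (A `\ b) ->
  MF Af (A `\ b).
Proof.
move=> M bA bAf HA'; have sub := MF_sub M.
case: M => HA H0 HAf Hmem Hinj Hc; split => //.
- move=> v; rewrite !inE; case: (eqVneq v b) => [->|vb] /=; first exact: negPf.
  exact: Hmem.
- move=> v w; rewrite !inE => /andP[_ vA] vAf /andP[_ wA] wAf; exact: Hinj.
Qed.

Lemma MF_mPGS Af A : MF Af A -> mPGS (Af, A).
Proof. by move/MF_moriPGS. Qed.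

Lemma SFL Af A A' : MF Af A -> MF Af A' -> chain (Af, A) (Af, A').
Proof.
move=> MA MA'.
have [n] := ubnP (#|` A `\` A'| + #|` A' `\` A|)%N; elim: n A MA => // n IH A MA.
rewrite ltnS => Hn.
have subA := MF_sub MA; have subA' := MF_sub MA'.
have primA := MF_prim MA; have primA' := MF_prim MA'.
have [eqAA'|neAA'] := eqVneq A A'.
  by rewrite eqAA'; apply: chain_refl; apply: MF_mPGS.
suff [A1 [M1 L1 H1]] : exists A1, [/\ MF Af A1, elink (Af, A) (Af, A1) &
    (#|` A1 `\` A'| + #|` A' `\` A1| < #|` A `\` A'| + #|` A' `\` A|)%N].
  apply: (chain_step (MF_mPGS MA) L1); apply: (IH _ M1).
  exact: leq_trans H1 Hn.
have memAf' := MF_mem MA'.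
case: (boolP (A' `<=` A)) => [A'A|/fsubsetPn [x xA' xA]].
  have /fsubsetPn [b bA bA'] : ~~ (A `<=` A').
    by apply: contra neAA' => AA'; rewrite eqEfsubset AA'.
  have bAf : b \notin Af by apply: contra bA' => /(fsubsetP subA').
  have HF : fullpgs (A `\ b).
    apply: fullpgs_sup (MF_full MA') _ _.
      by apply/fsubsetP => v vA'; rewrite !inE (fsubsetP A'A _ vA') andbT;
         apply: contraNneq bA' => <-.
    by move=> v; rewrite !inE => /andP[_]; apply: primA.
  exists (A `\ b); split; first exact: MF_del.
    left; right; left; split => //; apply: red_full => //; first exact: (MF_full MA).
      exact: fsubsetDl.
    by rewrite (cardfsD1 b A) bA.
  rewrite -addSn leq_add //.
    rewrite (cardfsD1 b (A `\` A')) !inE bA bA' /= ltnS fsubset_leq_card //.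
    by apply/fsubsetP => v; rewrite !inE => /andP[vA' /andP[vb vA]]; rewrite vb vA' vA.
  rewrite fsubset_leq_card //.
  apply/fsubsetP => v; rewrite !inE => /andP[H vA']; move: H; rewrite (fsubsetP A'A _ vA') andbT negbK => /eqP vb; by move: bA'; rewrite -vb vA'.
have xAf : x \notin Af by apply: contra xA => /(fsubsetP subA).
have xL : E x \notin spanV Af by move: xAf; rewrite memAf' xA' /=.
have px := primA' x xA'.
have meas : forall A1, A1 `\` A' `<=` A `\` A' -> A' `\` A1 `<=` (A' `\` A) `\ x ->
    (#|` A1 `\` A'| + #|` A' `\` A1| < #|` A `\` A'| + #|` A' `\` A|)%N.
  move=> A1 s1 s2; rewrite -addnS leq_add ?fsubset_leq_card //.
  rewrite (cardfsD1 x (A' `\` A)) !inE xA' xA /= ltnS fsubset_leq_card //.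
case: (pselect (exists b, [/\ b \in A, b \notin Af & sameray Af x b])).
  move=> [b [bA bAf sxb]].
  have bA' : b \notin A'.
    apply/negP => bA'; have := MF_inj MA' xA' xAf bA'.
    rewrite memAf' bA' /=; move: bAf; rewrite (MF_mem MA) bA /= => -> /(_ isT sxb) xb.
    by move: xA; rewrite xb bA.
  have M1 := MF_swap MA px xL xA bA bAf sxb.
  have xb : x != b by apply: contraNneq xA => ->.
  exists ((x |` A) `\ b); split => //.
    have HA2 : fullpgs (x |` A).
      apply: fullpgs_sup (MF_full MA) (fsubsetU1 _ _) _ => v; rewrite !inE.
      by move=> /orP[/eqP->//|]; apply: primA.
    left; right; right; right; right; left; exists (x |` A); split => //.
    - apply: fiber_of => //; try exact: (MF_ne MA); try exact: (MF_pgs MA).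
      move=> v; rewrite !inE; case: (eqVneq v x) => [->|_] /=; last exact: (MF_mem MA).
      by rewrite (negPf xL); exact: negPf.
    - apply: red_full => //; first exact: MF_full MA.
        exact: fsubsetU1.
      by rewrite cardfsU1 xA.
    - apply: red_full => //; first exact: MF_full M1.
        exact: fsubsetDl.
      by rewrite (cardfsD1 b (x |` A)) !inE bA orbT.
  apply: meas.
    by apply/fsubsetP => v; rewrite !inE => /andP[vA' /andP[_ /orP[/eqP vx|vA]]];
      [move: vA'; rewrite vx xA' | rewrite vA' vA].
  apply/fsubsetP => v; rewrite !inE => /andP[H vA']; rewrite vA' andbT.
  move: H; rewrite negb_and negbK negb_or => /orP[/eqP vb|/andP[->->]] //.
  by move: vA'; rewrite vb (negPf bA').
move=> Hnb.
have M1 : MF Af (x |` A).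
  apply: MF_add => // b bA bAf sxb; apply: Hnb; exists b; split => //.
exists (x |` A); split => //.
  right; right; left; split => //; apply: red_full => //; first exact: MF_full M1.
    exact: MF_full MA.
    exact: fsubsetU1.
  by rewrite cardfsU1 xA.
apply: meas.
  by apply/fsubsetP => v; rewrite !inE => /andP[vA' /orP[/eqP vx|vA]];
    [move: vA'; rewrite vx xA' | rewrite vA' vA].
apply/fsubsetP => v; rewrite !inE => /andP[H vA']; rewrite vA' andbT.
by move: H; rewrite negb_or => /andP[-> ->].
Qed.

End Work3.



Section Work4.
Variables (R : realType) (d : nat).
Local Notation lat := (lat d).
Local Notation E := (@emb R d).
Local Notation spanV := (@spanV R d).
Local Notation incone := (@incone R d).

Definition comb (X : seq lat) (g : lat -> R) := \sum_(x <- X) g x *: E x.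

Lemma combD X g1 g2 : comb X (fun x => g1 x + g2 x) = comb X g1 + comb X g2.
Proof. by rewrite /comb -big_split; apply: eq_bigr => x _; rewrite scalerDl. Qed.

Lemma combZ X a g : comb X (fun x => a * g x) = a *: comb X g.
Proof. by rewrite /comb scaler_sumr; apply: eq_bigr => x _; rewrite scalerA. Qed.

Lemma combN X g : comb X (fun x => - g x) = - comb X g.
Proof. by rewrite /comb -sumrN; apply: eq_bigr => x _; rewrite scaleNr. Qed.

Lemma comb_cat X Y g : comb (X ++ Y) g = comb X g + comb Y g.
Proof. by rewrite /comb big_cat. Qed.

Lemma comb_ext X g1 g2 : {in X, g1 =1 g2} -> comb X g1 = comb X g2.
Proof. by move=> H; rewrite /comb big_seq_cond [RHS]big_seq_cond; apply: eq_bigr => x /andP[xX _]; rewrite H. Qed.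

Lemma comb0 X g : {in X, forall x, g x = 0} -> comb X g = 0.
Proof. by move=> H; rewrite /comb big_seq big1 // => x xX; rewrite H // scale0r. Qed.

Lemma comb_ind X x : uniq X -> x \in X -> comb X (fun y => (y == x)%:R) = E x.
Proof.
move=> uX xX; rewrite /comb (big_rem x) //= eqxx scale1r big_seq big1 ?addr0 //.
by move=> y; rewrite (mem_rem_uniq _ uX) !inE => /andP[/negPf -> _]; rewrite scale0r.
Qed.

Lemma comb_span X g : comb X g \in <<map E X>>%VS.
Proof.
rewrite /comb big_seq; apply: memv_suml => x xX; apply: memvZ; apply: memv_span.
exact: map_f.
Qed.

Lemma REL X g : free (map E X) -> comb X g = 0 -> forall x, x \in X -> g x = 0.
Proof.
move=> fX H x xX.
have := @freeP _ _ _ (map_tuple E (in_tuple X)); rewrite fX => /(_ isT) /= HP.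
pose k := fun i : 'I_(size X) => g (nth 0 X i).
have Hk : \sum_(i < size X) k i *: (map E X)`_i = 0.
  rewrite -[X in _ = X]H /comb (big_nth 0) big_mkord; apply: eq_bigr => i _.
  by rewrite /k (nth_map 0).
have xi : (index x X < size X)%N by rewrite index_mem.
by have := HP k Hk (Ordinal xi); rewrite /k /= nth_index.
Qed.

Lemma SPANC X v : uniq X -> v \in <<map E X>>%VS -> exists g, v = comb X g.
Proof.
elim: X v => [|x X IH] v /=.
  by rewrite span_nil memv0 => _ /eqP ->; exists (fun _ => 0); rewrite /comb big_nil.
move=> /andP[xX uX]; rewrite span_cons => /memv_addP [u /vlineP [a ->] [w /(IH _ uX) [g ->] ->]].
exists (fun y => if y == x then a else g y); rewrite /comb big_cons eqxx; congr (_ + _).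
by rewrite big_seq [RHS]big_seq; apply: eq_bigr => y yX; case: eqP => // yx; move: xX; rewrite -yx yX.
Qed.

Lemma NOTIN U W z y : free (map E (U ++ W)) -> y \in W ->
  (exists2 g, z = comb (U ++ W) g & g y != 0) -> z \notin <<map E U>>%VS.
Proof.
move=> fX yW [g -> gy]; apply/negP => /SPANC.
have uX := free_uniq fX; rewrite map_inj_uniq in uX; last exact: emb_inj.
have uU : uniq U by move: uX; rewrite cat_uniq => /andP[].
case/(_ uU) => a Ha.
pose a' := fun x => if x \in U then a x else 0.
have e1 : comb (U ++ W) a' = comb U a.
  rewrite comb_cat (@comb0 W a') ?addr0; first by apply: comb_ext => x xU; rewrite /a' xU.
  move=> x xW; rewrite /a'; case: ifP => // xU.
  by move: uX; rewrite cat_uniq => /and3P[_ /hasP []]; exists x.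
have : comb (U ++ W) (fun x => g x + - a' x) = 0.
  by rewrite combD combN e1 -Ha subrr.
move/(REL fX)/(_ y); rewrite mem_cat yW orbT => /(_ isT).
have -> : a' y = 0.
  rewrite /a'; case: ifP => // yU.
  by move: uX; rewrite cat_uniq => /and3P[_ /hasP []]; exists y.
by rewrite oppr0 addr0 => /eqP; rewrite (negPf gy).
Qed.

End Work4.



Section Work5.
Variables (R : realType) (d : nat).
Local Notation lat := (lat d).
Local Notation E := (@emb R d).
Local Notation spanV := (@spanV R d).
Local Notation incone := (@incone R d).
Local Notation comb := (@comb R d).
Local Notation fullpgs := (@fullpgs R d).
Local Notation MF := (@MF R d).

Lemma dimfull : \dim (fullv : {vspace 'rV[R]_d}) = d.
Proof. by rewrite dimvf dim_matrix; exact: mul1n. Qed.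

Definition SF (X : seq lat) (v0 : lat) :=
  [/\ size X = d, free (map E X), (forall x, x \in v0 :: X -> primitive x) &
   exists c : lat -> R, (forall x, x \in X -> 0 < c x) /\ E v0 = - comb X c].

Definition Tset (X : seq lat) (v0 : lat) := seq_fset tt (v0 :: X).

Lemma memT X v0 v : (v \in Tset X v0) = (v == v0) || (v \in X).
Proof. by rewrite /Tset seq_fsetE in_cons. Qed.

Lemma uniqX X : free (map E X) -> uniq X.
Proof. by move/free_uniq; rewrite map_inj_uniq //; exact: emb_inj. Qed.

Lemma SF_uniq X v0 : SF X v0 -> uniq (v0 :: X).
Proof.
case=> _ fX _ [c [c0 Hc]]; rewrite /= uniqX // andbT; apply/negP => vX.
have : comb X (fun x => (x == v0)%:R + c x) = 0.
  by rewrite combD comb_ind ?uniqX // Hc addNr.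
move/(REL fX)/(_ v0 vX); rewrite eqxx => /eqP; rewrite gt_eqF //.
by rewrite ltr_wpDl ?ler01 ?c0.
Qed.

Lemma sumT X v0 (F : lat -> 'rV[R]_d) : uniq (v0 :: X) ->
  \sum_(v <- Tset X v0) F v = F v0 + \sum_(x <- X) F x.
Proof.
by move=> u; rewrite /Tset (perm_big _ (seq_fset_perm tt _)) undup_id // big_cons.
Qed.

Lemma cardT X v0 : uniq (v0 :: X) -> #|` Tset X v0| = (size X).+1.
Proof. by move=> u; rewrite /Tset size_seq_fset undup_id. Qed.

Lemma span_full X : size X = d -> free (map E X) -> <<map E X>>%VS = fullv.
Proof.
move=> sX fX; apply/eqP; rewrite eqEdim subvf dimfull /=.
by move: fX; rewrite /free => /eqP ->; rewrite size_map sX.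
Qed.

Lemma single_le (X : seq lat) (f : lat -> R) x : x \in X ->
  (forall y, y \in X -> 0 <= f y) -> f x <= \sum_(y <- X) f y.
Proof.
move=> xX f0; rewrite (big_rem x) //= lerDl big_seq; apply: sumr_ge0 => y yX.
by apply: f0; apply: mem_rem yX.
Qed.

Lemma SF_full X v0 : SF X v0 -> fullpgs (Tset X v0).
Proof.
move=> S; have u := SF_uniq S; case: S => sX fX pX [c [c0 Hc]].
split; first by move=> v; rewrite memT -in_cons; apply: pX.
move=> y; have : y \in <<map E X>>%VS by rewrite span_full // memvf.
case/(SPANC (uniqX fX)) => g ->.
pose t := \sum_(x <- X) `|g x| / c x.
have t0 : 0 <= t.
  by rewrite /t big_seq; apply: sumr_ge0 => x xX; rewrite divr_ge0 // ltW // c0.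
have ht : forall x, x \in X -> 0 <= g x + t * c x.
  move=> x xX; have cx := c0 x xX.
  have : `|g x| / c x <= t.
    by apply: single_le => // z zX; rewrite divr_ge0 // ltW // c0.
  rewrite ler_pdivrMr // => H; apply: le_trans (_ : 0 <= g x + `|g x|) _.
    by rewrite addrC -lerBlDr sub0r -normrN ler_norm.
  by rewrite lerD2l.
pose h := fun v => if v == v0 then t else if v \in X then g v + t * c v else 0.
exists h; split.
  by move=> v; rewrite /h; case: ifP => // _; case: ifP => // vX; apply: ht.
have v0X : v0 \notin X by case/andP: u.
rewrite sumT // /h eqxx Hc scalerN.
have -> : \sum_(x <- X) (if x == v0 then t else if x \in X then g x + t * c x else 0) *: E x
   = comb X (fun x => g x + t * c x).
  rewrite /comb big_seq [RHS]big_seq; apply: eq_bigr => x xX.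
  by rewrite xX; case: eqP => // xv; move: v0X; rewrite -xv xX.
by rewrite combD combZ addrCA addNr addr0.
Qed.

End Work5.



Section Work6.
Variables (R : realType) (d : nat).
Local Notation lat := (lat d).
Local Notation E := (@emb R d).
Local Notation spanV := (@spanV R d).
Local Notation incone := (@incone R d).
Local Notation comb := (@comb R d).
Local Notation fullpgs := (@fullpgs R d).
Local Notation MF := (@MF R d).
Local Notation SF := (@SF R d).
Local Notation elink := (@elink R d).

Lemma SF_MF X v0 : SF X v0 -> MF (Tset X v0) (Tset X v0).
Proof.
move=> S; have F := SF_full S; have u := SF_uniq S.
split => //.
- by apply/fset0Pn; exists v0; rewrite memT eqxx.
- exact: fullpgs_pgs.
- by move=> v; case vT: (v \in _) => //=; rewrite emb_span.
- by move=> v; case vT: (v \in Tset X v0); rewrite //= emb_span.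
- by rewrite cardT // fullpgs_span // dimfull; case: S => ->.
Qed.

Lemma keyc X v0 k Af a0 : SF X v0 -> (0 < k)%N -> (k < d)%N ->
  (forall v, (v \in Af) = (v == a0) || (v \in take k X)) ->
  a0 \notin take k X -> E a0 \in <<map E (take k X)>>%VS ->
  pgs R Af -> #|` Af| = (\dim (spanV Af)).+1 ->
  MF Af (a0 |` Tset X v0) /\ elink (Af, a0 |` Tset X v0) (Tset X v0, Tset X v0).
Proof.
move=> S k0 kd Hmem a0U a0L HAf Hc.
have FT := SF_full S; have uT := SF_uniq S.
case: S => sX fX pX [c [c0 Hcv]].
set U := take k X; set W := drop k X.
have XUW : X = U ++ W by rewrite cat_take_drop.
have fX' : free (map E (U ++ W)) by rewrite -XUW.
have uX := uniqX fX.
have spanAf : spanV Af = <<map E U>>%VS.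
  apply/eqP; rewrite eqEsubv; apply/andP; split.
    apply/span_subvP => y /mapP [v vAf ->]; move: vAf; rewrite Hmem.
    by case/orP => [/eqP->//|vU]; apply: memv_span; apply: map_f.
  apply: sub_span => y /mapP [v vU ->]; apply: map_f; by rewrite Hmem vU orbT.
have sW : (0 < size W)%N by rewrite size_drop sX subn_gt0.
have w0W : nth 0 W 0 \in W by apply: mem_nth.
set w0 := nth 0 W 0 in w0W.
have wX : forall w, w \in W -> w \in X by move=> w wW; rewrite XUW mem_cat wW orbT.
have cI : forall w, w \in W -> comb X (fun x => (x == w)%:R) = E w.
  by move=> w wW; rewrite comb_ind // wX.
have nW : forall w, w \in W -> E w \notin <<map E U>>%VS.
  move=> w wW; apply: (NOTIN fX' wW); exists (fun x => (x == w)%:R).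
    by rewrite -XUW cI.
  by rewrite eqxx oner_neq0.
have nv0 : E v0 \notin <<map E U>>%VS.
  apply: (NOTIN fX' w0W); exists (fun x => - c x); first by rewrite -XUW combN.
  by rewrite oppr_eq0 gt_eqF // c0 // wX.
have nWW : forall w w' l, w \in W -> w' \in W -> w != w' ->
    E w - l *: E w' \notin <<map E U>>%VS.
  move=> w w' l wW w'W ww'; apply: (NOTIN fX' wW).
  exists (fun x => (x == w)%:R + - (l * (x == w')%:R)).
    by rewrite -XUW combD combN combZ !cI.
  by rewrite eqxx (negPf ww') mulr0 oppr0 addr0 oner_neq0.
have nWv : forall w l, w \in W -> 0 < l -> E w - l *: E v0 \notin <<map E U>>%VS.
  move=> w l wW l0; apply: (NOTIN fX' wW).
  exists (fun x => (x == w)%:R + l * c x).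
    by rewrite -XUW combD combZ cI // Hcv scalerN opprK.
  by rewrite eqxx gt_eqF // addr_gt0 // mulr_gt0 // c0 // wX.
have nvW : forall w l, w \in W -> 0 < l -> E v0 - l *: E w \notin <<map E U>>%VS.
  move=> w l wW l0; apply: (NOTIN fX' wW).
  exists (fun x => - c x + - (l * (x == w)%:R)).
    by rewrite -XUW combD !combN combZ cI // Hcv.
  by rewrite eqxx mulr1 lt_eqF // -opprD oppr_lt0 ltr_wpDr ?ltW // c0 // wX.
have a0Af : a0 \in Af by rewrite Hmem eqxx.
have a0W : a0 \notin W by apply/negP => H; move: (nW a0 H); rewrite a0L.
have a0v0 : a0 != v0 by apply: contraNneq nv0 => <-.
have a0T : a0 \notin Tset X v0.
  by rewrite memT negb_or a0v0 XUW mem_cat negb_or a0U a0W.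
have memA : forall v, (v \in a0 |` Tset X v0) = (v == a0) || (v \in Tset X v0).
  by move=> v; rewrite !inE.
have cls : forall v, v \in a0 |` Tset X v0 -> v \notin Af -> (v == v0) || (v \in W).
  move=> v vA; rewrite Hmem negb_or => /andP[va vU]; move: vA; rewrite memA memT (negPf va) /= => /orP[->//|].
  by rewrite XUW mem_cat (negPf vU) /= => ->; rewrite orbT.
have nL : forall v, v \in a0 |` Tset X v0 -> v \notin Af -> E v \notin <<map E U>>%VS.
  by move=> v vA vAf; case/orP: (cls v vA vAf) => [/eqP->//|]; apply: nW.
have primA : forall v, v \in a0 |` Tset X v0 -> primitive v.
  move=> v; rewrite memA => /orP[/eqP->|vT]; first by case: HAf => H _; apply: H.
  by case: FT => H _; apply: H.
have FA : fullpgs (a0 |` Tset X v0) by apply: fullpgs_sup FT (fsubsetU1 _ _) primA.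
have MA : MF Af (a0 |` Tset X v0).
  split => //.
  - by apply/fset0Pn; exists a0.
  - move=> v; rewrite spanAf; case vAf: (v \in Af).
      move: vAf; rewrite Hmem => /orP[/eqP->|vU]; first by rewrite memA eqxx.
      rewrite memA memT XUW mem_cat vU !orbT /=; apply/esym/memv_span; exact: map_f.
    by case vA: (v \in _) => //=; apply/esym/negbTE/nL => //; rewrite vAf.
  - move=> v w vA vAf wA wAf [l l0]; rewrite spanAf.
    case/orP: (cls v vA vAf) => [/eqP->|vW]; case/orP: (cls w wA wAf) => [/eqP->//|wW].
    + by move/negP: (nvW w l wW l0).
    + by move/negP: (nWv v l vW l0).
    + by case: (eqVneq v w) => // vw; move/negP: (nWW v w l vW wW vw).
split => //.
left; right; right; left; exists (a0 |` Tset X v0); split => //.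
- apply: fiber_of => //; first by apply/fset0Pn; exists a0; rewrite memA eqxx.
    exact: fullpgs_pgs.
  by move=> v; case vA: (v \in _); rewrite //= emb_span.
- by case/MF_moriPGS: MA.
- by apply: red_full => //; [exact: fsubsetU1 | rewrite cardfsU1 a0T].
- by apply: red_full => //; [exact: fsubsetU1 | rewrite cardfsU1 a0T].
Qed.


End Work6.



Lemma int_mulrn_eq1 (x : int) (k : nat) : x *+ k = 1 -> k = 1%N.
Proof.
move=> H; have := congr1 absz H; rewrite -mulr_natr natz abszM /= => /eqP.
by rewrite muln_eq1 => /andP[_ /eqP].
Qed.

Section Work7.
Variables (R : realType) (d : nat).
Local Notation lat := (lat d).
Local Notation E := (@emb R d).
Local Notation comb := (@comb R d).
Local Notation SF := (@SF R d).

Lemma PRIM (v : lat) : v != 0 -> exists w m, [/\ primitive w, (0 < m)%N & v = w *+ m].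
Proof.
move=> v0.
have [i [j vij]] : exists i j, v i j != 0.
  case: (pselect (exists i j, v i j != 0)) => // H; exfalso; move/negP: v0; apply.
  apply/eqP/matrixP => a b; rewrite mxE; apply/eqP; apply/negP => nz; apply: H.
  by exists a; exists b; apply/negP.
pose P := fun m : nat => (0 < m)%N && [forall a, [forall b, (m%:Z %| v a b)%Z]].
have exP : exists m, P m by exists 1%N; rewrite /P /=; apply/forallP => a; apply/forallP => b; apply: dvd1z.
have ubP : forall m, P m -> (m <= `|v i j|)%N.
  move=> m /andP[m0 /forallP /(_ i) /forallP /(_ j)]; rewrite dvdzE /= => H.
  by apply: dvdn_leq => //; rewrite absz_gt0.
case: (ex_maxnP exP ubP) => m /andP[m0 /forallP Hm] Hmax.
pose w := \matrix_(a, b) (v a b %/ m%:Z)%Z.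
have vw : v = w *+ m.
  apply/matrixP => a b; rewrite mulmxnE mxE -mulr_natr natz divzK //.
  by move: (Hm a) => /forallP.
exists w, m; split => //; split.
  by apply: contraNneq v0 => w0; rewrite vw w0 mul0rn.
move=> k w' ww'.
have k0 : (0 < k)%N by case: k ww' => // ww'; move: v0; rewrite vw ww' mulr0n mul0rn eqxx.
have : P (k * m)%N.
  rewrite /P muln_gt0 k0 m0 /=; apply/forallP => a; apply/forallP => b.
  by rewrite vw ww' -mulrnA mulmxnE -mulr_natr natz dvdz_mull.
move/Hmax; rewrite -{2}(mul1n m) leq_pmul2r // => k1.
by apply/eqP; rewrite eqn_leq k1 k0.
Qed.


Lemma mkSF (X : seq lat) : size X = d -> free (map E X) ->
  (forall x, x \in X -> primitive x) -> (0 < d)%N -> exists v0, SF X v0.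
Proof.
move=> sX fX pX d0.
pose v : lat := - \sum_(x <- X) x.
have Ev : E v = - comb X (fun _ => 1).
  by rewrite embN emb_sum /comb; congr (- _); apply: eq_bigr => x _; rewrite scale1r.
have v0 : v != 0.
  apply/negP => /eqP vz; move: Ev; rewrite vz emb0 => /esym /eqP; rewrite oppr_eq0 => /eqP H.
  have xX : nth 0 X 0 \in X by apply: mem_nth; rewrite sX.
  by move: (REL fX H xX) => /eqP; rewrite oner_eq0.
case: (PRIM v0) => w [m [pw m0 vw]].
exists w; split => //.
  by move=> x; rewrite in_cons => /orP[/eqP->//|]; apply: pX.
exists (fun _ => m%:R^-1); split => [x _|]; first by rewrite invr_gt0 ltr0n.
have : E v = m%:R *: E w by rewrite vw embMn.
rewrite Ev => H.
have -> : E w = m%:R^-1 *: (m%:R *: E w) by rewrite scalerA mulVf ?scale1r // pnatr_eq0 -lt0n.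
by rewrite -H scalerN -(combZ X (m%:R^-1) (fun _ => 1)); congr (- comb _ _); apply/funext => x; rewrite mulr1.
Qed.

Lemma prim_neg (v : lat) : primitive v -> primitive (- v).
Proof.
case=> v0 H; split; first by rewrite oppr_eq0.
move=> k w vw; apply: (H k (- w)); by rewrite mulNrn -vw opprK.
Qed.

Lemma prim_delta (j : 'I_d) : primitive (delta_mx 0 j : lat).
Proof.
split.
  apply/negP => /eqP /matrixP /(_ 0 j); rewrite !mxE !eqxx /= => /eqP.
  by rewrite oner_eq0.
move=> k w /matrixP /(_ 0 j); rewrite mulmxnE !mxE !eqxx /= => /esym.
exact: int_mulrn_eq1.
Qed.

Lemma emb_delta (j : 'I_d) : E (delta_mx 0 j) = delta_mx 0 j.
Proof. by apply/matrixP => a b; rewrite !mxE; case: (_ && _). Qed.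

Lemma EXTg (Cs U : seq lat) : free (map E U) -> exists W,
  [/\ {subset W <= Cs}, free (map E (W ++ U)) &
      forall c, c \in Cs -> E c \in <<map E (W ++ U)>>%VS].
Proof.
elim: Cs U => [|c Cs IH] U fU; first by exists [::]; split.
case: (boolP (E c \in <<map E U>>%VS)) => cU.
  case: (IH U fU) => W [sW fW spW]; exists W; split => //.
    by move=> x xW; rewrite in_cons sW ?orbT.
  move=> c'; rewrite in_cons => /orP[/eqP->|]; last exact: spW.
  move: cU; apply/subvP/sub_span => y /mapP [x xU ->]; apply: map_f.
  by rewrite mem_cat xU orbT.
have fcU : free (map E (c :: U)) by rewrite /= free_cons cU fU.
case: (IH _ fcU) => W [sW fW spW]; exists (W ++ [:: c]); rewrite -catA /=; split => //.
  move=> x; rewrite mem_cat in_cons in_nil orbF => /orP[/sW xC|/eqP->]; rewrite in_cons ?xC ?eqxx ?orbT //.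
move=> c'; rewrite in_cons => /orP[/eqP->|]; last exact: spW.
by apply: memv_span; apply: map_f; rewrite mem_cat mem_head orbT.
Qed.

Lemma EXT (U : seq lat) : free (map E U) -> exists W,
  [/\ forall w, w \in W -> primitive w, free (map E (U ++ W)) & size (U ++ W) = d].
Proof.
move=> fU.
case: (EXTg [seq delta_mx 0 j | j <- enum 'I_d] fU) => W [sW fW spW].
exists W; split.
- by move=> w /sW /mapP [j _ ->]; apply: prim_delta.
- by rewrite (perm_free (Y := map E (W ++ U))) // perm_map // perm_catC.
have full : <<map E (W ++ U)>>%VS = fullv.
  apply/eqP; rewrite eqEsubv subvf /=; apply/subvP => y _.
  rewrite [y]row_sum_delta; apply: memv_suml => j _; apply: memvZ.
  rewrite -emb_delta; apply: spW; apply: map_f; by rewrite mem_enum.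
move: fW; rewrite /free full dimfull size_map => Hf.
by rewrite size_cat addnC -size_cat; apply/eqP; rewrite eq_sym.
Qed.

Lemma SF_perm X X' v0 : perm_eq X X' -> SF X v0 -> SF X' v0 /\ Tset X v0 = Tset X' v0.
Proof.
move=> pXX' [sX fX pX [c [c0 Hc]]]; split.
  split.
  - by rewrite -(perm_size pXX').
  - by rewrite -(perm_free (perm_map E pXX')).
  - by move=> x; rewrite in_cons -(perm_mem pXX') -in_cons; apply: pX.
  exists c; split; first by move=> x; rewrite -(perm_mem pXX'); apply: c0.
  by rewrite Hc /comb (perm_big _ pXX').
by apply/fsetP => x; rewrite !memT (perm_mem pXX').
Qed.

End Work7.



Section Work8.
Variables (R : realType) (d : nat).
Local Notation lat := (lat d).
Local Notation E := (@emb R d).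
Local Notation spanV := (@spanV R d).
Local Notation incone := (@incone R d).
Local Notation comb := (@comb R d).
Local Notation fullpgs := (@fullpgs R d).
Local Notation MF := (@MF R d).
Local Notation SF := (@SF R d).
Local Notation elink := (@elink R d).
Local Notation chain := (@chain R d).
Local Notation mPGS := (@moriPGS R d).

Lemma Ustuff (Af : {fset lat}) a0 : pgs R Af -> a0 \in Af ->
  let U := enum_fset (Af `\ a0) in
  [/\ uniq U, (forall v, (v \in Af) = (v == a0) || (v \in U)), a0 \notin U,
      (exists c, (forall x, 0 <= c x) /\ E a0 = - comb U c) &
      spanV Af = <<map E U>>%VS].
Proof.
move=> HAf a0Af U.
have memU : forall v, (v \in U) = (v != a0) && (v \in Af) by move=> v; rewrite !inE.
have mem : forall v, (v \in Af) = (v == a0) || (v \in U).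
  by move=> v; rewrite memU; case: eqP => [->|]; rewrite ?a0Af.
have [c [c0 Hc]] : exists c, (forall x, 0 <= c x) /\ E a0 = - comb U c.
  have : incone Af (- E a0) by case: HAf => _ H; apply: H; rewrite memvN emb_span.
  case=> g [g0]; rewrite (big_fsetD1 a0) //= -/(comb U g) => H.
  have ga : 1 + g a0 != 0 by rewrite gt_eqF // ltr_wpDr.
  exists (fun x => (1 + g a0)^-1 * g x); split.
    by move=> x; rewrite mulr_ge0 // invr_ge0 addr_ge0.
  have H2 : comb U g = - ((1 + g a0) *: E a0).
    by rewrite scalerDl scale1r opprD H [_ + comb U g]addrC addrK.
  by rewrite combZ H2 scalerN opprK scalerA mulVf // scale1r.
have aL : E a0 \in <<map E U>>%VS by rewrite Hc memvN comb_span.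
split => //.
- exact: fset_uniq.
- by rewrite memU eqxx.
- by exists c.
apply/eqP; rewrite eqEsubv; apply/andP; split.
  apply/span_subvP => y /mapP [v vAf ->]; move: vAf; rewrite mem.
  by case/orP => [/eqP->//|vU]; apply: memv_span; apply: map_f.
apply: sub_span => y /mapP [v vU ->]; apply: map_f; by rewrite mem vU orbT.
Qed.


Lemma sizeU (Af : {fset lat}) a0 : a0 \in Af ->
  #|` Af| = (size (enum_fset (Af `\ a0))).+1.
Proof. by move=> a0Af; rewrite (cardfsD1 a0) a0Af. Qed.

Lemma R2 Af A : MF Af A -> spanV Af = fullv ->
  A = Af /\ exists X v0, SF X v0 /\ Tset X v0 = Af.
Proof.
move=> M Hf.
have [a0 a0Af] := fset0Pn _ (MF_ne M).
have HAf := MF_pgs M.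
case: (Ustuff HAf a0Af) => uU mem a0U [c [c0 Hc]] spU.
set U := enum_fset (Af `\ a0) in uU mem a0U Hc spU.
have sU : size U = d.
  by move: (MF_card M); rewrite (sizeU a0Af) Hf dimfull => -[].
have fU : free (map E U) by rewrite /free -spU Hf dimfull size_map sU.
split; first by apply/fsetP => v; rewrite (MF_mem M) Hf memvf andbT.
exists U, a0; split; last by apply/fsetP => v; rewrite memT mem.
split => //.
  by move=> x; rewrite in_cons -mem => xA; case: HAf => H _; apply: H.
exists c; split => // x xU.
have : incone Af (- E x) by case: HAf => _ H; apply: H; rewrite memvN emb_span // mem xU orbT.
case=> g [g0]; rewrite (big_fsetD1 a0) //= -/(comb U g) => H.
have : comb U (fun y => g y + - (g a0 * c y) + (y == x)%:R) = 0.
  by rewrite !combD combN combZ comb_ind // -scalerN -Hc [comb U g + _]addrC -H addNr.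
move/(REL fU)/(_ x xU); rewrite eqxx => H1.
rewrite lt_def c0 andbT; apply/negP => /eqP cx0; move: H1; rewrite cx0 mulr0 oppr0 addr0.
by move/eqP; rewrite gt_eqF // ltr_wpDl ?ler01.
Qed.

Lemma TOSIMP p : mPGS p -> exists X v0, SF X v0 /\ chain p (Tset X v0, Tset X v0).
Proof.
case: p => Af A /MF_moriPGS M.
case: (eqVneq (spanV Af) fullv) => Hf.
  case: (R2 M Hf) => -> [X [v0 [S HT]]]; exists X, v0; split => //.
  rewrite HT; apply: chain_refl; apply: MF_mPGS; rewrite -HT; exact: SF_MF.
have [a0 a0Af] := fset0Pn _ (MF_ne M).
have HAf := MF_pgs M.
case: (Ustuff HAf a0Af) => uU mem a0U [c [c0 Hc]] spU.
set U := enum_fset (Af `\ a0) in uU mem a0U Hc spU.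
have dimL : \dim (spanV Af) = size U by move: (MF_card M); rewrite (sizeU a0Af) => -[].
have fU : free (map E U) by rewrite /free -spU dimL size_map.
have pa0 : primitive a0 by case: HAf => H _; apply: H.
have k0 : (0 < size U)%N.
  rewrite lt0n -dimL dimv_eq0; apply: contraNneq (pa0.1) => L0.
  have : E a0 \in spanV Af by apply: emb_span.
  by rewrite L0 memv0 -emb0 => /eqP /emb_inj ->.
have kd : (size U < d)%N.
  rewrite -dimL; have := dimvS (subvf (spanV Af)); rewrite dimfull => Hle; rewrite ltn_neqAle Hle andbT.
  by apply: contra Hf => /eqP H; rewrite eqEdim subvf /= dimfull H.
case: (EXT fU) => W [pW fX sX].
have pX : forall x, x \in U ++ W -> primitive x.
  move=> x; rewrite mem_cat => /orP[xU|]; last exact: pW.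
  by case: HAf => H0 _; apply: H0; rewrite mem xU orbT.
case: (mkSF sX fX pX (leq_ltn_trans (leq0n _) kd)) => v0 S.
have tk : take (size U) (U ++ W) = U by rewrite take_size_cat.
have [M2 L2] : MF Af (a0 |` Tset (U ++ W) v0) /\
    elink (Af, a0 |` Tset (U ++ W) v0) (Tset (U ++ W) v0, Tset (U ++ W) v0).
  apply: (keyc S k0 kd) => //; rewrite ?tk //; last exact: (MF_card M).
  by have := emb_span R a0Af; rewrite spU.
exists (U ++ W), v0; split => //.
apply: chain_trans (SFL M M2) _.
apply: chain_link (MF_mPGS M2) (MF_mPGS (SF_MF S)) L2.
Qed.

End Work8.



Section Work9.
Variables (R : realType) (d : nat).
Local Notation lat := (lat d).
Local Notation E := (@emb R d).
Local Notation spanV := (@spanV R d).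
Local Notation incone := (@incone R d).
Local Notation comb := (@comb R d).
Local Notation fullpgs := (@fullpgs R d).
Local Notation MF := (@MF R d).
Local Notation SF := (@SF R d).
Local Notation elink := (@elink R d).
Local Notation chain := (@chain R d).
Local Notation mPGS := (@moriPGS R d).

Lemma SF_prim X v0 x : SF X v0 -> x \in v0 :: X -> primitive x.
Proof. by case=> _ _ H _; apply: H. Qed.

Lemma Enz (t : lat) : primitive t -> E t != 0.
Proof. by case=> t0 _; apply: contraNneq t0; rewrite -emb0 => /emb_inj ->. Qed.

Lemma negt_neq (t : lat) : primitive t -> - t != t.
Proof.
move=> pt; apply/negP => /eqP H; move: (Enz pt).
have : E t + E t = 0 by rewrite -{1}H embN addNr.
rewrite -mulr2n -scaler_nat => /eqP; rewrite scaler_eq0 pnatr_eq0 /= => /eqP ->.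
by rewrite eqxx.
Qed.

Lemma LT t Y Y' v v' : (1 < d)%N -> SF (t :: Y) v -> SF (t :: Y') v' ->
  chain (Tset (t :: Y) v, Tset (t :: Y) v) (Tset (t :: Y') v', Tset (t :: Y') v').
Proof.
move=> d2 S S'.
have pt : primitive t by apply: (SF_prim S); rewrite !in_cons eqxx orbT.
have Et0 := Enz pt.
set Af : {fset lat} := [fset - t; t].
have memAf : forall v, (v \in Af) = (v == - t) || (v == t) by move=> x; rewrite !inE.
have spanAf : spanV Af = <[E t]>%VS.
  apply/eqP; rewrite eqEsubv; apply/andP; split.
    apply/span_subvP => y /mapP [x xAf ->]; move: xAf; rewrite memAf.
    by case/orP => /eqP->; rewrite ?embN ?memvN memv_line.
  by rewrite -memvE emb_span // memAf eqxx orbT.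
have HAf : pgs R Af.
  split.
    by move=> x; rewrite memAf => /orP[] /eqP->; [apply: prim_neg|].
  move=> x; rewrite spanAf => /vlineP [a ->].
  case: (lerP 0 a) => a0.
    by apply: incone_scale => //; apply: incone_elem; rewrite memAf eqxx orbT.
  have -> : a *: E t = (- a) *: E (- t) by rewrite embN scalerN scaleNr opprK.
  by apply: incone_scale; [rewrite oppr_ge0 ltW | apply: incone_elem; rewrite memAf eqxx].
have cAf : #|` Af| = (\dim (spanV Af)).+1.
  by rewrite spanAf dim_vline Et0 cardfs2 negt_neq.
have key : forall Z w, SF (t :: Z) w ->
    MF Af (- t |` Tset (t :: Z) w) /\
    elink (Af, - t |` Tset (t :: Z) w) (Tset (t :: Z) w, Tset (t :: Z) w).
  move=> Z w SZ; apply: (keyc (k := 1) SZ) => //.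
  - by move=> x; rewrite memAf /= take0 in_cons in_nil orbF.
  - by rewrite /= take0 in_cons in_nil orbF negt_neq.
  - by rewrite /= take0 /= span_seq1 embN memvN memv_line.
have [M1 L1] := key _ _ S; have [M2 L2] := key _ _ S'.
apply: chain_trans (chain_link (MF_mPGS (SF_MF S)) (MF_mPGS M1) (elink_sym L1)) _.
apply: chain_trans (SFL M1 M2) _.
exact: chain_link (MF_mPGS M2) (MF_mPGS (SF_MF S')) L2.
Qed.

Lemma CH X1 v1 X2 v2 : (1 < d)%N -> SF X1 v1 -> SF X2 v2 ->
  chain (Tset X1 v1, Tset X1 v1) (Tset X2 v2, Tset X2 v2).
Proof.
move=> d2 S1 S2.
case: X1 S1 => [|t Y1] S1; first by exfalso; case: S1 => sX _ _ _; move: d2; rewrite -sX.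
have pt : primitive t by apply: (SF_prim S1); rewrite !in_cons eqxx orbT.
have [t' [t'X2 nt']] : exists t', t' \in X2 /\ E t' \notin <[E t]>%VS.
  case: (pselect (exists t', t' \in X2 /\ E t' \notin <[E t]>%VS)) => // H.
  exfalso; case: S2 => sX fX _ _.
  have : (<<map E X2>> <= <[E t]>)%VS.
    apply/span_subvP => y /mapP [x xX ->]; apply/negPn/negP => nx; apply: H.
    by exists x.
  move/dimvS; rewrite span_full // dimfull dim_vline (Enz pt).
  by move=> H'; move: (leq_trans d2 H').
have pt' : primitive t' by apply: (SF_prim S2); rewrite in_cons t'X2 orbT.
have fU : free (map E [:: t; t']).
  rewrite /= free_cons seq1_free span_seq1; apply/andP; split; last first.
    by apply: contraNneq nt' => ->; rewrite mem0v.
  apply/negP => /vlineP [a Ha]; move/negP: nt'; apply.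
  have a0 : a != 0 by apply: contraNneq (Enz pt) => a0; rewrite Ha a0 scale0r.
  by apply/vlineP; exists a^-1; rewrite Ha scalerA mulVf // scale1r.
case: (EXT fU) => W [pW fX sX].
have pX : forall x, x \in [:: t, t' & W] -> primitive x.
  by move=> x; rewrite !in_cons => /orP[/eqP->//|/orP[/eqP->//|]]; apply: pW.
case: (mkSF sX fX pX (ltnW d2)) => v S.
apply: chain_trans (LT d2 S1 S) _.
have pe : perm_eq ([:: t] ++ [:: t'] ++ W) ([:: t'] ++ [:: t] ++ W) by apply/permPl; exact: perm_catCA.
have [S' ->] := SF_perm pe S.
have [S2' ->] := SF_perm (perm_to_rem t'X2) S2.
exact: LT d2 S' S2'.
Qed.

Lemma D0 X v0 : d = 0%N -> ~ SF X v0.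
Proof.
move=> d0 S; have := SF_prim S (mem_head _ _); case=> H _; move/negP: H; apply.
by apply/eqP/matrixP => i j; have := ltn_ord j; rewrite {2}d0.
Qed.

Lemma prim1 (v : lat) : d = 1%N -> primitive v ->
  v = const_mx 1 \/ v = - const_mx 1.
Proof.
move=> d1 pv.
have d0 : (0 < d)%N by rewrite d1.
pose j0 : 'I_d := Ordinal d0.
have jj : forall j : 'I_d, j = j0 by move=> j; apply/val_inj => /=; move: (ltn_ord j); rewrite {2}d1 ltnS leqn0 => /eqP ->.
set a := v 0 j0.
have vc : v = const_mx a by apply/matrixP => i j; rewrite mxE (ord1 i) (jj j).
have : v = (map_mx (fun z : int => sgz z) v) *+ `|a|%N.
  apply/matrixP => i j; rewrite mulmxnE !mxE (ord1 i) (jj j) -/a.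
  by rewrite -mulr_natr natz -intEsg.
case: pv => _ H /H a1.
case Ha: a a1 => [n|n] /= a1.
  by left; rewrite vc Ha a1.
by right; rewrite vc Ha; move: a1 => [->]; apply/matrixP => i j; rewrite !mxE.
Qed.

Lemma D1 X1 v1 X2 v2 : d = 1%N -> SF X1 v1 -> SF X2 v2 -> Tset X1 v1 = Tset X2 v2.
Proof.
move=> d1 S1 S2.
suff H : forall X v0, SF X v0 -> Tset X v0 = [fset const_mx 1; - const_mx 1].
  by rewrite (H _ _ S1) (H _ _ S2).
move=> X v0 S; apply/eqP; rewrite eqEfcard; apply/andP; split.
  apply/fsubsetP => x; rewrite memT -in_cons => /(SF_prim S) /(prim1 d1).
  by case=> ->; rewrite !inE eqxx ?orbT.
rewrite cardT ?(SF_uniq S) //; case: S => -> _ _ _; rewrite cardfs2 d1 ltnS.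
exact: leq_b1.
Qed.

End Work9.

Theorem corollary3p2 (R : realType) (d : nat)
    (Af A Af' A' : {fset 'rV[int]_d}) :
  moriPGS R (Af, A) -> moriPGS R (Af', A') ->
  chain R (Af, A) (Af', A').
Proof.
move=> Hp Hq.
case: (TOSIMP Hp) => X1 [v1 [S1 C1]]; case: (TOSIMP Hq) => X2 [v2 [S2 C2]].
apply: chain_trans C1 _; apply: chain_trans _ (chain_sym C2).
case: (ltngtP d 1) => Hd.
- by exfalso; apply: (D0 _ S1); move: Hd; rewrite ltnS leqn0 => /eqP.
- exact: CH.
- rewrite (D1 Hd S1 S2); apply: chain_refl; apply: MF_mPGS; exact: SF_MF.
Qed.
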